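(* Let $(G,\varphi)$ be a complex unit gain graph, let $u$ be a cut vertex of $G$, and let $H$ be a connected component of $G-u$. If $r(H,\varphi)=r(H+u,\varphi)$, then $r(G,\varphi)=r(H,\varphi)+r(G-V(H),\varphi)$.
   Context: A complex unit gain graph $(G,\varphi)$ is a simple finite graph $G$ with a gain function $\varphi$ assigning to each oriented edge $e_{ij}$ a complex number of modulus $1$ with $\varphi(e_{ji})=\overline{\varphi(e_{ij})}$. Its adjacency matrix $A(G,\varphi)$ has $(i,j)$-entry $\varphi(e_{ij})$ if $v_i,v_j$ are adjacent and $0$ otherwise; $r(G,\varphi)$ is its rank. For an induced subgraph $K$ of $G$, $(K,\varphi)$ denotes $K$ with the restriction of $\varphi$. $H+u$ denotes the subgraph of $G$ induced by $V(H)\cup\{u\}$, and $G-V(H)$ is obtained from $G$ by deleting all vertices of $H$ (so it contains $u$). *)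

(* Defs.v *)
From HB Require Import structures.
From mathcomp Require Import all_boot all_order all_algebra.
From mathcomp Require Import reals.
From mathcomp Require Import complex.
Set Implicit Arguments. Unset Strict Implicit. Unset Printing Implicit Defensive.
Import Order.TTheory GRing.Theory Num.Theory.
Local Open Scope ring_scope.

(* A complex unit gain graph on the finite vertex type T:
   [e] is the (symmetric, irreflexive) adjacency relation of the simple graph G,
   [phi x y] is the gain of the oriented edge from x to y, with values in
   C = R[i] (R a real field, e.g. the reals). *)
Definition is_cugg (R : realType) (T : finType) (e : rel T)
    (phi : T -> T -> R[i]) : Prop :=
  [/\ irreflexive e, symmetric e,
      (forall x y, e x y -> `|phi x y| = 1) &
      (forall x y, e x y -> phi y x = (phi x y)^*)].

Definition induced_rel (T : finType) (e : rel T) (S : {set T}) : rel T :=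
  fun x y => [&& x \in S, y \in S & e x y].

Definition components (T : finType) (e : rel T) (S : {set T}) : {set {set T}} :=
  [set [set y | connect (induced_rel e S) x y] | x in S].

Definition cut_vertex (T : finType) (e : rel T) (u : T) : bool :=
  (#|components e [set: T]| < #|components e (~: [set u])|)%N.

Definition adj_mx (R : realType) (T : finType) (e : rel T)
    (phi : T -> T -> R[i]) (S : {set T}) : 'M[R[i]]_#|S| :=
  \matrix_(i < #|S|, j < #|S|)
     (if e (enum_val i) (enum_val j) then phi (enum_val i) (enum_val j) else 0).

Definition gain_rank (R : realType) (T : finType) (e : rel T)
    (phi : T -> T -> R[i]) (S : {set T}) : nat :=
  \rank (adj_mx e phi S).

(* Main.v *)
Require Import Defs.
From HB Require Import structures.
From mathcomp Require Import all_boot all_order all_algebra.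
From mathcomp Require Import reals.
From mathcomp Require Import complex.
Set Implicit Arguments. Unset Strict Implicit. Unset Printing Implicit Defensive.
Import Order.TTheory GRing.Theory Num.Theory.
Local Open Scope ring_scope.

Lemma rank_unit_l (F : fieldType) n (L M : 'M[F]_n) :
  L \in unitmx -> \rank (L *m M) = \rank M.
Proof.
move=> uL; rewrite -mxrank_tr trmx_mul mxrankMfree ?mxrank_tr //.
by rewrite row_free_unit unitmx_tr.
Qed.

Lemma rank_unit_r (F : fieldType) n (L M : 'M[F]_n) :
  L \in unitmx -> \rank (M *m L) = \rank M.
Proof. by move=> uL; rewrite mxrankMfree // row_free_unit. Qed.

Lemma unit_1subnil (F : fieldType) n (v : 'M[F]_n) :
  v *m v = 0 -> (1%:M - v) \in unitmx.
Proof.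
move=> vv; have := @mulmx1_unit _ _ (1%:M - v) (1%:M + v).
rewrite mulmxBl mul1mx mulmxDr mulmx1 vv addr0 addrK => H.
by case: (H erefl).
Qed.

Lemma rank_split (F : fieldType) n (X Y h k : 'M[F]_n) :
  h *m (X + Y) = X -> k *m (X + Y) = Y -> X *m k = 0 -> Y *m k = Y ->
  \rank (X + Y)%R = (\rank X + \rank Y)%N.
Proof.
move=> hX kY Xk Yk; apply/eqP; rewrite eqn_leq mxrank_add /=.
rewrite -mxrank_disjoint_sum; last first.
  apply/eqP; rewrite -submx0; apply/rV_subP => w.
  rewrite sub_capmx => /andP[/submxP[W1 ->] /submxP[W2 eW2]].
  have : W1 *m X *m k = W1 *m X by rewrite eW2 -mulmxA Yk.
  by rewrite -mulmxA Xk mulmx0 => <-; rewrite sub0mx.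
rewrite (addsmxE X Y).
have -> : col_mx X Y = col_mx h k *m (X + Y) by rewrite mul_col_mx hX kY.
exact: mxrankM_maxr.
Qed.
Lemma elim_core (F : fieldType) n (A h k E : 'M[F]_n) :
  h + k = 1%:M -> h *m h = h -> k *m k = k -> h *m k = 0 -> k *m h = 0 ->
  E *m E = E -> E *m h = 0 -> h *m E = 0 -> h^T = h -> E^T = E ->
  h *m A *m k = h *m A *m E -> k *m A *m h = E *m A *m h -> E *m A *m E = 0 ->
  \rank (h *m A *m h) = \rank ((h + E)%R *m A *m (h + E)%R) ->
  \rank A = (\rank (h *m A *m h) + \rank (k *m A *m k))%N.
Proof.
move=> hk1 hh kk hk kh EE Eh hE hT ET hAk kAh EAE rk.
set U := h + E.
have hU : h *m U = h by rewrite mulmxDr hh hE addr0.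
have Uh : U *m h = h by rewrite mulmxDl hh Eh addr0.
have EU : E *m U = E by rewrite mulmxDr Eh EE add0r.
have UE : U *m E = E by rewrite mulmxDl hE EE add0r.
have e1 : h *m A *m h = h *m (U *m A *m h) by rewrite !mulmxA hU.
have e2 : U *m A *m h = (U *m A *m U) *m h by rewrite -!mulmxA Uh.
have r1 : (\rank (h *m A *m h) <= \rank (U *m A *m h))%N.
  by rewrite e1 mxrankM_maxr.
have r2 : (\rank (U *m A *m h) <= \rank (U *m A *m U))%N.
  by rewrite e2 mxrankM_maxl.
have rq1 : \rank (h *m A *m h) = \rank (U *m A *m h).
  by apply/eqP; rewrite eqn_leq r1 /= rk r2.
have rq2 : \rank (U *m A *m h) = \rank (U *m A *m U).
  by rewrite -rq1.
have sub1 : (h *m A *m h <= U *m A *m h)%MS by rewrite e1 submxMl.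
have sub2 : (U *m A *m h <= h *m A *m h)%MS.
  by rewrite -(mxrank_leqif_sup sub1).2 rq1.
have : (E *m A *m h <= h *m A *m h)%MS.
  have -> : E *m A *m h = E *m (U *m A *m h) by rewrite !mulmxA EU.
  exact: submx_trans (submxMl _ _) sub2.
case/submxP => Y eY.
have sub3 : ((U *m A *m h)^T <= (U *m A *m U)^T)%MS.
  by rewrite e2 trmx_mul hT submxMl.
have sub4 : ((U *m A *m U)^T <= (U *m A *m h)^T)%MS.
  by rewrite -(mxrank_leqif_sup sub3).2 !mxrank_tr rq2.
have : ((U *m A *m E)^T <= (U *m A *m h)^T)%MS.
  have -> : U *m A *m E = (U *m A *m U) *m E by rewrite -!mulmxA UE.
  by rewrite trmx_mul; exact: submx_trans (submxMl _ _) sub4.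
case/submxP => Z eZ.
set X := Z^T.
have eX : U *m A *m E = U *m A *m h *m X.
  by rewrite -[U *m A *m E]trmxK eZ trmx_mul trmxK.
have hAhX : h *m A *m h *m X = h *m A *m E.
  have := congr1 (mulmx h) eX; rewrite !mulmxA hU => ->; done.
have EAhX : E *m A *m h *m X = 0.
  have := congr1 (mulmx E) eX; rewrite !mulmxA EU EAE => ->; done.
set a := h *m A *m h; set b := h *m A *m k; set c := k *m A *m h; set d := k *m A *m k.
have Ah : A *m h = a + c.
  by rewrite -[A in LHS]mul1mx -hk1 mulmxDl mulmxDl.
have Ak : A *m k = b + d.
  by rewrite -[A in LHS]mul1mx -hk1 mulmxDl mulmxDl.
have hA : h *m A = a + b.
  by rewrite -[A in LHS]mulmx1 -hk1 !mulmxDr !mulmxA.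
have Adec : A = (a + c) + (b + d).
  by rewrite -Ah -Ak -mulmxDr hk1 mulmx1.
set P := 1%:M - h *m X *m E.
set L := 1%:M - E *m Y *m h.
have uP : P \in unitmx.
  apply: unit_1subnil; by rewrite -!mulmxA (mulmxA E h) Eh mul0mx !mulmx0.
have uL : L \in unitmx.
  apply: unit_1subnil; by rewrite -!mulmxA (mulmxA h E) hE mul0mx !mulmx0.
have AP : A *m P = A - b.
  rewrite mulmxBr mulmx1 !mulmxA Ah !mulmxDl.
  have -> : a *m X *m E = b by rewrite hAhX -mulmxA EE -hAk.
  have -> : c *m X *m E = 0 by rewrite /c kAh EAhX mul0mx.
  by rewrite addr0.
have hb : h *m b = b by rewrite /b !mulmxA hh.
have ha : h *m a = a by rewrite /a !mulmxA hh.
have LAP : L *m A *m P = a + d.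
  rewrite -mulmxA AP mulmxBl mul1mx.
  have -> : E *m Y *m h *m (A - b) = c.
    rewrite -mulmxA mulmxBr hA hb addrK -mulmxA -eY /c kAh !mulmxA EE //.
  by rewrite {1}Adec (addrC b d) addrA addrK (addrAC a c d) addrK.
have -> : \rank A = \rank (L *m A *m P) by rewrite rank_unit_r // rank_unit_l.
rewrite LAP (@rank_split _ _ a d h k) //.
- by rewrite mulmxDr ha /d !mulmxA hk !mul0mx addr0.
- by rewrite mulmxDr /a /d !mulmxA kh kk !mul0mx add0r.
- by rewrite /a -mulmxA hk mulmx0.
- by rewrite /d -mulmxA kk.
Qed.
Lemma sumT (F : pzRingType) (T : finType) (x : T) (f : 'I_#|T| -> F) :
  \sum_(k < #|T|) (x == enum_val k)%:R * f k = f (enum_rank x).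
Proof.
rewrite (bigD1 (enum_rank x)) //= enum_rankK eqxx mul1r big1 ?addr0 // => k kne.
rewrite (_ : (x == enum_val k) = false) ?mul0r //; apply/negbTE.
by apply: contra kne => /eqP ->; rewrite enum_valK.
Qed.

Lemma sumS (F : pzRingType) (T : finType) (S : {set T}) (x : T) (xS : x \in S)
   (g : 'I_#|S| -> F) :
  \sum_(i < #|S|) (enum_val i == x)%:R * g i = g (enum_rank_in xS x).
Proof.
rewrite (bigD1 (enum_rank_in xS x)) //= enum_rankK_in // eqxx mul1r big1 ?addr0 //.
move=> k kne; rewrite (_ : (enum_val k == x) = false) ?mul0r //; apply/negbTE.
apply: contra kne => /eqP ek; apply/eqP; apply: enum_val_inj; by rewrite ek enum_rankK_in.
Qed.

Lemma sumS0 (F : pzRingType) (T : finType) (S : {set T}) (x : T) (xS : x \notin S)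
   (g : 'I_#|S| -> F) :
  \sum_(i < #|S|) (enum_val i == x)%:R * g i = 0.
Proof.
rewrite big1 // => k _; rewrite (_ : (enum_val k == x) = false) ?mul0r //.
apply/negbTE; apply: contra xS => /eqP <-; exact: enum_valP.
Qed.

Definition A0 (R : realType) (T : finType) (e : rel T) (phi : T -> T -> R[i])
  : 'M[R[i]]_#|T| :=
  \matrix_(i < #|T|, j < #|T|)
     (if e (enum_val i) (enum_val j) then phi (enum_val i) (enum_val j) else 0).

Definition msk (R : realType) (T : finType) (S : {set T}) : 'M[R[i]]_#|T| :=
  diag_mx (\row_(i < #|T|) ((enum_val i \in S)%:R : R[i])).

Definition Psel (R : realType) (T : finType) (S : {set T}) : 'M[R[i]]_(#|S|, #|T|) :=
  \matrix_(i < #|S|, j < #|T|) ((enum_val i == enum_val j)%:R : R[i]).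

Lemma rank_link (R : realType) (T : finType) (e : rel T) (phi : T -> T -> R[i])
  (S : {set T}) :
  gain_rank e phi S = \rank (msk R S *m A0 e phi *m msk R S).
Proof.
set P := Psel R S.
have ha : P *m A0 e phi *m P^T = adj_mx e phi S.
  apply/matrixP => i j; rewrite !mxE.
  under eq_bigr => k _ do rewrite !mxE.
  under eq_bigr => k _ do under eq_bigr => l _ do rewrite !mxE.
  under eq_bigr => k _ do rewrite (sumT (enum_val i) (fun l => if e (enum_val l) (enum_val k) then phi (enum_val l) (enum_val k) else 0)) /= enum_rankK mulrC.
  by rewrite (sumT (enum_val j) (fun k => if e (enum_val i) (enum_val k) then phi (enum_val i) (enum_val k) else 0)) /= enum_rankK.
have hb : P^T *m P = msk R S.
  apply/matrixP => a b; rewrite !mxE.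
  under eq_bigr => k _ do rewrite !mxE.
  case: (boolP (enum_val a \in S)) => aS.
    rewrite (sumS aS (fun k => (enum_val k == enum_val b)%:R)) /= enum_rankK_in // (inj_eq enum_val_inj).
    by case: (a == b).
  by rewrite (sumS0 aS) /= mul0rn.
have hc : P *m P^T = 1%:M.
  apply/matrixP => i j; rewrite !mxE.
  under eq_bigr => k _ do rewrite !mxE.
  rewrite (sumT (enum_val i) (fun k => (enum_val j == enum_val k)%:R)) enum_rankK.
  by rewrite eq_sym (inj_eq enum_val_inj).
have rf : row_free P.
  rewrite /row_free eqn_leq rank_leq_row /=.
  by rewrite -{1}(mxrank1 (R[i]) #|S|) -hc mxrankM_maxl.
have -> : msk R S *m A0 e phi *m msk R S = P^T *m adj_mx e phi S *m P.
  by rewrite -ha -hb !mulmxA.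
rewrite mxrankMfree // -mxrank_tr trmx_mul trmxK mxrankMfree // mxrank_tr //.
Qed.

Lemma msk_mul (R : realType) (T : finType) (S S' : {set T}) :
  msk R S *m msk R S' = msk R (S :&: S').
Proof.
rewrite /msk mulmx_diag; congr diag_mx; apply/rowP => j; rewrite !mxE inE.
by case: (_ \in S); case: (_ \in S'); rewrite ?mulr1 ?mulr0.
Qed.

Lemma msk_tr (R : realType) (T : finType) (S : {set T}) : (msk R S)^T = msk R S.
Proof. exact: tr_diag_mx. Qed.

Lemma msk0 (R : realType) (T : finType) : msk R (set0 : {set T}) = 0.
Proof. by apply/matrixP => i j; rewrite !mxE inE mul0rn. Qed.

Lemma mskT (R : realType) (T : finType) : msk R [set: T] = 1%:M.
Proof. by apply/matrixP => i j; rewrite !mxE inE. Qed.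

Lemma msk_compl (R : realType) (T : finType) (S : {set T}) :
  msk R S + msk R (~: S) = 1%:M.
Proof.
apply/matrixP => i j; rewrite !mxE inE.
by case: (_ \in S); case: (i == j); rewrite /= ?addr0 ?add0r.
Qed.

Lemma msk_U (R : realType) (T : finType) (S : {set T}) (u : T) :
  u \notin S -> msk R (u |: S) = msk R S + msk R [set u].
Proof.
move=> uS; apply/matrixP => i j; rewrite !mxE in_setU1 in_set1.
case: eqP => [->|_]; first rewrite (negPf uS).
  by case: (i == j); rewrite /= ?addr0 ?add0r.
by case: (_ \in S); case: (i == j); rewrite /= ?addr0 ?add0r.
Qed.

Lemma mask_entry (R : realType) (T : finType) (S S' : {set T})
  (M : 'M[R[i]]_#|T|) i j :
  (msk R S *m M *m msk R S') i j =
  (enum_val i \in S)%:R * M i j * (enum_val j \in S')%:R.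
Proof. by rewrite /msk mul_mx_diag mul_diag_mx !mxE. Qed.

Lemma conn_in (T : finType) (e : rel T) (S : {set T}) x y :
  x \in S -> connect (induced_rel e S) x y -> y \in S.
Proof.
move=> xS /connectP [p pth ->]; elim: p x xS pth => //= z p IH x xS.
by move=> /andP [/and3P[_ zS _] pth]; exact: IH zS pth.
Qed.

Lemma comp_facts (T : finType) (e : rel T) (u : T) (H : {set T}) :
  H \in components e (~: [set u]) ->
  u \notin H /\ (forall x y, x \in H -> e x y -> y != u -> y \in H).
Proof.
case/imsetP => x0 x0S ->; split.
  apply/negP; rewrite inE => /(conn_in x0S); by rewrite !inE eqxx.
move=> x y; rewrite !inE => cx exy yu.
have xS := conn_in x0S cx.
apply: (connect_trans cx); apply: connect1.
by rewrite /induced_rel xS !inE yu exy.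
Qed.

Lemma lemma4p1_aux (R : realType) (T : finType) (e : rel T)
    (phi : T -> T -> R[i]) (u : T) (H : {set T}) :
  is_cugg e phi ->
  H \in components e (~: [set u]) ->
  gain_rank e phi H = gain_rank e phi (u |: H) ->
  gain_rank e phi [set: T] = (gain_rank e phi H + gain_rank e phi (~: H))%N.
Proof.
move=> [irr sym _ _] Hc hr.
have [uH clos] := comp_facts Hc.
rewrite !rank_link mskT mul1mx mulmx1 in hr *.
rewrite msk_U // in hr.
apply: (@elim_core _ _ (A0 e phi) (msk R H) (msk R (~: H)) (msk R [set u])).
- exact: msk_compl.
- by rewrite msk_mul setIid.
- by rewrite msk_mul setIid.
- by rewrite msk_mul setICr msk0.
- by rewrite msk_mul setIC setICr msk0.
- by rewrite msk_mul setIid.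
- rewrite msk_mul (_ : [set u] :&: H = set0) ?msk0 //.
  by apply/setP => x; rewrite !inE; case: (boolP (x == u)) => [/eqP ->|xu]; rewrite ?(negPf uH) ?(negPf xu) ?andbF ?andFb //.
- rewrite msk_mul (_ : H :&: [set u] = set0) ?msk0 //.
  by apply/setP => x; rewrite !inE; case: (boolP (x == u)) => [/eqP ->|xu]; rewrite ?(negPf uH) ?(negPf xu) ?andbF ?andFb //.
- exact: msk_tr.
- exact: msk_tr.
- apply/matrixP => i j; rewrite !mask_entry !mxE.
  case: (boolP (enum_val i \in H)) => xH; last by rewrite !mul0r.
  case exy: (e (enum_val i) (enum_val j)); last by rewrite !mulr0 !mul0r.
  have -> : (enum_val j \in ~: H) = (enum_val j \in [set u]).
    rewrite in_setC in_set1.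
    case: (boolP (enum_val j \in H)) => yH /=.
      apply/esym/negbTE/eqP => yu; move: uH; by rewrite -yu yH.
    by apply/esym; apply: contraNT yH; apply: clos xH exy.
  by [].
- apply/matrixP => i j; rewrite !mask_entry !mxE.
  case: (boolP (enum_val j \in H)) => yH; last by rewrite !mulr0.
  case exy: (e (enum_val i) (enum_val j)); last by rewrite !mulr0 !mul0r.
  have -> : (enum_val i \in ~: H) = (enum_val i \in [set u]).
    rewrite in_setC in_set1.
    case: (boolP (enum_val i \in H)) => xH /=.
      apply/esym/negbTE/eqP => xu; move: uH; by rewrite -xu xH.
    apply/esym; apply: contraNT xH; apply: clos yH _; by rewrite sym.
  by [].
- apply/matrixP => i j; rewrite !mask_entry !mxE !in_set1.
  case: eqP => [xu|]; last by rewrite !mul0r.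
  case: eqP => [yu|]; last by rewrite !mulr0.
  by rewrite xu yu irr mulr0 mul0r.
- exact: hr.
Qed.

Theorem lemma4p1 (R : realType) (T : finType) (e : rel T)
    (phi : T -> T -> R[i]) (u : T) (H : {set T}) :
  is_cugg e phi ->
  cut_vertex e u ->
  H \in components e (~: [set u]) ->
  gain_rank e phi H = gain_rank e phi (u |: H) ->
  gain_rank e phi [set: T] = (gain_rank e phi H + gain_rank e phi (~: H))%N.
Proof. by move=> cg _; apply: lemma4p1_aux. Qed.
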